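(* Consider the ASYMM algorithm described in the context, and let $t_1,t_2,\dots$ be the increasing subsequence of universal iterations at which a multiplier update (task T2) is performed, with $t_1$ the first such iteration. Then, for every $k=0,1,\dots$, between $t_{kN+1}$ and $t_{(k+1)N+1}$ every node performs task T1 at least once.
   Context: Problem: minimize $\sum_{i=1}^N f_i(x)$ over $x\in\mathbb{R}^n$ subject to $h_i(x)=0$ and $g_i(x)\le 0$ for $i=1,\dots,N$, with $f_i,h_i,g_i:\mathbb{R}^n\to\mathbb{R}$ private to node $i$. The nodes communicate over a fixed, undirected, connected graph $\mathcal{G}=(\mathcal{V},\mathcal{E})$, $\mathcal{V}=\{1,\dots,N\}$, with diameter $d_G$; $\mathcal{N}_i=\{j:(i,j)\in\mathcal{E}\}\cup\{i\}$ and $d_i=|\mathcal{N}_i|$. With multipliers $\nu_{ij}\in\mathbb{R}^n$, $\lambda_i,\mu_i\in\mathbb{R}$ and positive penalty parameters $\rho_{ij},\rho_{E_i},\rho_{I_i}$, the local Augmented Lagrangian of node $i$ is $\tilde{\mathcal{L}}_i=f_i(x_i)+\sum_{j\in\mathcal{N}_i\setminus\{i\}}[x_i^\top(\nu_{ij}-\nu_{ji})+\frac{\rho_{ij}+\rho_{ji}}{2}\|x_i-x_j\|^2]+\lambda_ih_i(x_i)+\frac{\rho_{E_i}}{2}\|h_i(x_i)\|^2+\frac{1}{2\rho_{I_i}}(\max\{0,\mu_i+\rho_{I_i}g_i(x_i)\}^2-\mu_i^2)$. Asynchronous model: each node alternates between IDLE mode (listening, possibly updating local variables) and AWAKE mode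 (computing and broadcasting), triggered by a local clock with waiting times $T_i\le\bar T_i$ for some constant $\bar T_i$; only one node can be awake at each time instant. Each awakening is an iteration $t\in\mathbb{N}$ of a universal discrete time, and $i_t$ is the node awake at iteration $t$. ASYMM: node $i$ stores $x_i$, copies $x_j$ of neighbors' variables, $\lambda_i,\mu_i,\nu_{ij}$ and received $\nu_{ji}$ ($j\in\mathcal{N}_i\setminus\{i\}$), penalties, a constant $L_i>0$, a tolerance $\epsilon_i$, a flag $M_{done}$ (initially $0$) and a matrix $S_i\in\{0,1\}^{d_G\times d_i}$ (initially zero) whose column $j|_i$ refers to neighbor $j$ and column $d_i$ to node $i$. When AWAKE: (T1) if $\prod_{l=1}^{d_i}S_i[d_G,l]\ne1$ and $M_{done}=0$: set $x_i\gets x_i-\frac1{L_i}\nabla_{x_i}\tilde{\mathcal{L}}_i$; if $\|\nabla_{x_i}\tilde{\mathcal{L}}_i\|\le\epsilon_i$ set $S_i[1,d_i]\gets1$; set $S_i[l,d_i]\gets\prod_{b=1}^{d_i}S_i[l-1,b]$ for $l=2,\dots,d_G$; broadcast $x_i$ and $S_i[:,d_i]$ to neighbors. (T2) Then, if $\prod_{l=1}^{d_i}S_i[d_G,l]=1$ and $M_{done}=0$: set $\nu_{ij}\gets\nu_{ij}+\rho_{ij}(x_i-x_j)$ for $j\in\mathcal{N}_i\setminus\{i\}$, $\lambda_i\gets\lambda_i+\rho_{E_i}h_i(x_i)$, $\mu_i\gets\max\{0,\mu_i+\rho_{I_i}g_i(x_i)\}$, update (non-decreasingly) $\rho_{E_i},\rho_{I_i},\rho_{ij}$,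 set $M_{done}\gets1$, broadcast $\nu_{ij},\rho_{ij}$ to each neighbor $j$. When IDLE: if $S_j[:,d_j]$ is received from a neighbor $j$ and no new $\nu_{ji}$ has already been received, set $S_i[l,j|_i]\gets S_j[l,d_j]$, $l=1,\dots,d_G$; if $\nu_{ji},\rho_{ji}$ are received from a neighbor $j$, set all entries of row $d_G$ of $S_i$ to $1$; if a new $x_j$ is received, update the local copy of $x_j$; if $M_{done}=1$ and new $\nu_{ji}$ has been received from all neighbors, set $M_{done}\gets0$, $S_i\gets0$ and update $\epsilon_i$. *)

(* Defs.v *)
From mathcomp Require Import all_boot all_order all_algebra.
From mathcomp Require Import all_classical all_reals all_analysis.
Set Implicit Arguments. Unset Strict Implicit. Unset Printing Implicit Defensive.
Import Order.TTheory GRing.Theory Num.Theory.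
Local Open Scope ring_scope.

Definition dist_le {N : nat} (adj : rel 'I_N) (i j : 'I_N) (d : nat) : Prop :=
  exists p : seq 'I_N, [/\ path adj i p, last i p = j & (size p <= d)%N].

Definition undirected_connected {N : nat} (adj : rel 'I_N) : Prop :=
  [/\ symmetric adj, irreflexive adj &
      forall i j : 'I_N, exists d, dist_le adj i j d].

Definition is_diameter {N : nat} (adj : rel 'I_N) (dG : nat) : Prop :=
  (forall i j : 'I_N, dist_le adj i j dG) /\
  (exists i j : 'I_N, forall d, (d < dG)%N -> ~ dist_le adj i j d).

Definition Nb {N : nat} (adj : rel 'I_N) (i : 'I_N) : pred 'I_N :=
  [pred j | adj i j || (j == i)].

Definition dotv {R : realType} {n : nat} (u v : 'rV[R]_n) : R :=
  \sum_(k < n) u 0 k * v 0 k.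
Definition sqnorm {R : realType} {n : nat} (u : 'rV[R]_n) : R := dotv u u.
Definition enorm {R : realType} {n : nat} (u : 'rV[R]_n) : R :=
  Num.sqrt (sqnorm u).

Definition grad {R : realType} {n : nat} (F : 'rV[R]_n -> R) (y : 'rV[R]_n)
  : 'rV[R]_n :=
  \row_(k < n) derive1 (fun s : R => F (y + s *: delta_mx 0 k)) 0.

(*   xc i j       : copy at node i of x_j                                      *)
(*   nu i j       : nu_ij (stored at i)                                        *)
(*   nuc i j      : received copy at node i of nu_ji                           *)
(*   rho i j      : rho_ij (stored at i); rhoc i j : received copy of rho_ji   *)
(*   S i l j      : entry of S_i in row l (1 <= l <= dG) and in the column of  *)
(*                  j in N_i (column d_i being the one of i itself)            *)
(*   recv i j     : a new nu_ji has been received by i (since last reset)      *)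
Record state (R : realType) (N n : nat) := State {
  x : 'I_N -> 'rV[R]_n;
  xc : 'I_N -> 'I_N -> 'rV[R]_n;
  lam : 'I_N -> R;
  mu : 'I_N -> R;
  nu : 'I_N -> 'I_N -> 'rV[R]_n;
  nuc : 'I_N -> 'I_N -> 'rV[R]_n;
  rho : 'I_N -> 'I_N -> R;
  rhoc : 'I_N -> 'I_N -> R;
  rhoE : 'I_N -> R;
  rhoI : 'I_N -> R;
  eps : 'I_N -> R;
  Md : 'I_N -> bool;
  S : 'I_N -> nat -> 'I_N -> bool;
  recv : 'I_N -> 'I_N -> bool }.

Section ASYMM.
Context {R : realType} {N n : nat}.
Context (adj : rel 'I_N) (dG : nat).
Context (f h g : 'I_N -> 'rV[R]_n -> R) (Lc : 'I_N -> R).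

Implicit Types (st : state R N n) (a i j : 'I_N).

Definition Ltil st i (y : 'rV[R]_n) : R :=
  f i y
  + \sum_(j | adj i j)
      (dotv y (nu st i j - nuc st i j)
       + (rho st i j + rhoc st i j) / 2 * sqnorm (y - xc st i j))
  + lam st i * h i y
  + rhoE st i / 2 * (h i y) ^+ 2
  + (2 * rhoI st i)^-1 *
      ((Num.max 0 (mu st i + rhoI st i * g i y)) ^+ 2 - (mu st i) ^+ 2).

Definition rowfull (Sm : 'I_N -> nat -> 'I_N -> bool) i (l : nat) : bool :=
  [forall j, (j \in Nb adj i) ==> Sm i l j].

Definition doT1 st a : bool := ~~ rowfull (S st) a dG && ~~ Md st a.

Definition gradL st a : 'rV[R]_n := grad (Ltil st a) (x st a).

Fixpoint newcol st a (small : bool) (l : nat) : bool :=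
  match l with
  | 0 => S st a 0 a
  | 1 => S st a 1 a || small
  | l'.+1 => [forall j, (j \in Nb adj a) ==>
                 (if j == a then newcol st a small l' else S st a l' j)]
  end.

Definition Scol st a (l : nat) : bool :=
  if doT1 st a && (1 <= l <= dG)%N
  then newcol st a (enorm (gradL st a) <= eps st a) l
  else S st a l a.

Definition x1 st a : 'rV[R]_n :=
  if doT1 st a then x st a - (Lc a)^-1 *: gradL st a else x st a.

Definition S1 st a : 'I_N -> nat -> 'I_N -> bool :=
  fun i l j => if (i == a) && (j == a) then Scol st a l else S st i l j.

Definition doT2 st a : bool := rowfull (S1 st a) a dG && ~~ Md st a.

(* One universal iteration: node a is awake (T1 then T2), its broadcasts are
   received by its neighbours (IDLE rules), and then every node whose reset
   condition holds resets.  rE', rI', rho' are the new (non-decreasing)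
   penalty parameters chosen by a in T2, eps' the new tolerances. *)
Definition step st a (rE' rI' : R) (rho' : 'I_N -> R) (eps' : 'I_N -> R)
  : state R N n :=
  let T1 := doT1 st a in
  let T2 := doT2 st a in
  let xa := x1 st a in
  let x2 := fun i => if i == a then xa else x st i in
  let nu2 := fun i j => if T2 && (i == a) && adj a j
                        then nu st a j + rho st a j *: (xa - xc st a j)
                        else nu st i j in
  let lam2 := fun i => if T2 && (i == a) then lam st a + rhoE st a * h a xa
                       else lam st i in
  let mu2 := fun i => if T2 && (i == a)
                      then Num.max 0 (mu st a + rhoI st a * g a xa)
                      else mu st i in
  let rho2 := fun i j => if T2 && (i == a) && adj a j then rho' j
                         else rho st i j in
  let rhoE2 := fun i => if T2 && (i == a) then rE' else rhoE st i in
  let rhoI2 := fun i => if T2 && (i == a) then rI' else rhoI st i in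
  let Md2 := fun i => if T2 && (i == a) then true else Md st i in
  let xc2 := fun i j => if T1 && adj a i && (j == a) then xa else xc st i j in
  let S2 := fun i l j =>
    if T2 && adj a i && (l == dG) then true
    else if T1 && adj a i && (j == a) && ~~ recv st i a && (1 <= l <= dG)%N
    then Scol st a l
    else S1 st a i l j in
  let recv2 := fun i j => if T2 && adj a i && (j == a) then true
                          else recv st i j in
  let nuc2 := fun i j => if T2 && adj a i && (j == a) then nu2 a i
                         else nuc st i j in
  let rhoc2 := fun i j => if T2 && adj a i && (j == a) then rho2 a i
                          else rhoc st i j in
  let rst := fun i => Md2 i && [forall j, adj i j ==> recv2 i j] in
  {| x := x2; xc := xc2; lam := lam2; mu := mu2; nu := nu2; nuc := nuc2;
     rho := rho2; rhoc := rhoc2; rhoE := rhoE2; rhoI := rhoI2;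
     eps := fun i => if rst i then eps' i else eps st i;
     Md := fun i => if rst i then false else Md2 i;
     S := fun i l j => if rst i then false else S2 i l j;
     recv := fun i j => if rst i then false else recv2 i j |}.

Definition init_ok st : Prop :=
  [/\ (forall i, Md st i = false),
      (forall i l j, S st i l j = false),
      (forall i j, recv st i j = false),
      (forall i j, adj i j -> 0 < rho st i j /\ 0 < rhoc st i j) &
      (forall i, 0 < rhoE st i /\ 0 < rhoI st i)].

(* an execution of ASYMM: sequence of states along the universal iterations,
   sched t = i_t the node awake at iteration t *)
Definition asymm_run (st : nat -> state R N n) (sched : nat -> 'I_N) : Prop :=
  init_ok (st 0%N) /\
  forall t : nat, exists (rE' rI' : R) (rho' eps' : 'I_N -> R),
    [/\ rhoE (st t) (sched t) <= rE', rhoI (st t) (sched t) <= rI',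
        (forall j, adj (sched t) j -> rho (st t) (sched t) j <= rho' j) &
        st t.+1 = step (st t) (sched t) rE' rI' rho' eps'].

Definition T1_at (run : nat -> state R N n) (sched : nat -> 'I_N) (t : nat) : bool :=
  doT1 (run t) (sched t).
Definition T2_at (run : nat -> state R N n) (sched : nat -> 'I_N) (t : nat) : bool :=
  doT2 (run t) (sched t).

(* t is the m-th (m >= 1) iteration at which a multiplier update (T2) occurs,
   i.e. t = t_m *)
Definition nth_T2 (run : nat -> state R N n) (sched : nat -> 'I_N) (m t : nat)
  : Prop :=
  (1 <= m)%N /\ T2_at run sched t /\
  count (T2_at run sched) (iota 0 t) = m.-1.

End ASYMM.

(* Asynchronous timing model: iteration t happens at time tau t (strictly
   increasing, so one node awake per instant); each node i wakes up at least
   once in every time window of length Tbar i. *)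
Definition timing_ok {R : realType} {N : nat} (sched : nat -> 'I_N)
  (tau : nat -> R) (Tbar : 'I_N -> R) : Prop :=
  [/\ 0 <= tau 0%N, (forall t, tau t < tau t.+1), (forall i, 0 < Tbar i) &
      forall (i : 'I_N) (s : R), 0 <= s ->
        exists t, sched t = i /\ s < tau t <= s + Tbar i].

(* Main.v *)
Require Import Defs.
From mathcomp Require Import all_boot all_order all_algebra.
From mathcomp Require Import all_classical all_reals all_analysis.
From mathcomp Require Import zify.
Import Order.TTheory GRing.Theory Num.Theory.
Local Open Scope ring_scope.

Section Main.
Context {R : realType} {N n : nat} (adj : rel 'I_N) (dG : nat)
  (f h g : 'I_N -> 'rV[R]_n -> R) (Lc : 'I_N -> R)
  (sched : nat -> 'I_N) (st : nat -> state R N n).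

Definition T2b (s : state R N n) a := doT2 adj dG f h g s a.
Definition Md2 (s : state R N n) a i := if T2b s a && (i == a) then true else Md s i.
Definition recv2 (s : state R N n) a i j :=
  if T2b s a && adj a i && (j == a) then true else recv s i j.
Definition rst (s : state R N n) a i := Md2 s a i && [forall j, adj i j ==> recv2 s a i j].
Definition S2 (s : state R N n) a i l j :=
  if T2b s a && adj a i && (l == dG) then true
  else if doT1 adj dG s a && adj a i && (j == a) && ~~ recv s i a && (1 <= l <= dG)%N
  then Scol adj dG f h g s a l
  else S1 adj dG f h g s a i l j.

Lemma Md_step s a rE' rI' rho' eps' i :
  Md (step adj dG f h g Lc s a rE' rI' rho' eps') i = if rst s a i then false else Md2 s a i.
Proof. by []. Qed.
Lemma recv_step s a rE' rI' rho' eps' i j :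
  recv (step adj dG f h g Lc s a rE' rI' rho' eps') i j = if rst s a i then false else recv2 s a i j.
Proof. by []. Qed.
Lemma S_step s a rE' rI' rho' eps' i l j :
  S (step adj dG f h g Lc s a rE' rI' rho' eps') i l j = if rst s a i then false else S2 s a i l j.
Proof. by []. Qed.

Hypothesis adj_sym : symmetric adj.
Hypothesis adj_irr : irreflexive adj.
Hypothesis dG_pos : (0 < dG)%N.
Hypothesis diam : forall i j, dist_le adj i j dG.
Hypothesis init : init_ok adj (st 0%N).
Hypothesis run : forall t, exists rE' rI' rho' eps',
  st t.+1 = step adj dG f h g Lc (st t) (sched t) rE' rI' rho' eps'.

Definition T2t t := T2_at adj dG f h g st sched t.
Definition cnt (w : 'I_N) t := count (fun u => T2t u && (sched u == w)) (iota 0 t).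
Definition rr w t := (cnt w t - Md (st t) w)%N.
Definition P w m t := exists u, [/\ (u < t)%N, sched u = w, T1_at adj dG st sched u & cnt w u = m].
Definition Q m t := forall w, P w m t.

Lemma cntS w t : cnt w t.+1 = (cnt w t + (T2t t && (sched t == w)))%N.
Proof. by rewrite /cnt -addn1 iotaD count_cat /= add0n addn0. Qed.

Lemma T2_noMd (s : state R N n) a : T2b s a -> Md s a = false.
Proof. by rewrite /T2b /doT2 => /andP[_ /negbTE]. Qed.
Lemma T1_noMd (s : state R N n) a : doT1 adj dG s a -> Md s a = false.
Proof. by rewrite /doT1 => /andP[_ /negbTE]. Qed.

Lemma M_inv t i : Md (st t) i -> (0 < cnt i t)%N.
Proof.
elim: t i => [|t IH] i.
  by case: init => H _ _ _ _; rewrite H.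
have [rE' [rI' [rho' [eps' E]]]] := run t.
rewrite E Md_step cntS /Md2; case: (rst _ _ _) => //.
case T: (T2b (st t) (sched t) && (i == sched t)).
  move/andP: T => [H2 /eqP Ei] _; rewrite Ei eqxx andbT.
  have -> : T2t t by exact: H2.
  by rewrite addn1.
move/IH=> H.
exact: leq_trans H (leq_addr _ _).
Qed.

Lemma rrS t i : rr i t.+1 = (rr i t + rst (st t) (sched t) i)%N.
Proof.
have [rE' [rI' [rho' [eps' E]]]] := run t.
have Hm := M_inv t i.
rewrite /rr cntS E Md_step /rst /Md2.
case T: (T2b (st t) (sched t) && (i == sched t)).
  move/andP: T => [H2 /eqP Ei]; rewrite Ei in Hm *.
  rewrite (T2_noMd _ _ H2) eqxx andbT.
  have -> : T2t t by exact: H2.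
  by case: [forall _, _] => /=; rewrite ?subn0 ?addn1 ?subn1 ?addn0.
have -> : T2t t && (sched t == i) = false by rewrite eq_sym; exact: T.
rewrite addn0; case: (Md (st t) i) Hm => /= Hm; last by rewrite addn0.
case: [forall _, _] => /=; last by rewrite addn0.
have := Hm isT; lia.
Qed.

Lemma rr_mono i t t' : (t <= t')%N -> (rr i t <= rr i t')%N.
Proof.
elim: t' => [|t' IH]; first by rewrite leqn0 => /eqP ->.
rewrite leq_eqVlt => /orP[/eqP -> //|/IH H].
by apply: leq_trans H _; rewrite rrS leq_addr.
Qed.

Lemma Pmono w m t t' : (t <= t')%N -> P w m t -> P w m t'.
Proof. by move=> Ht [u [H1 H2 H3 H4]]; exists u; split=> //; exact: leq_trans H1 Ht. Qed.

Arguments Pmono {w m t t'}.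

Lemma Pbound w m t : P w m t.+1 -> (m <= rr w t)%N.
Proof.
move=> [u [Hu Hs HT Hc]].
have : rr w u = m.
  by rewrite /rr -Hs (T1_noMd _ _ HT) subn0 Hs.
by move=> <-; apply: rr_mono.
Qed.

Definition INV t := forall i j l w, j \in Nb adj i -> (1 <= l <= dG)%N ->
  S (st t) i l j -> dist_le adj j w l.-1 -> P w (rr i t) t.

Lemma selfP t : doT1 adj dG (st t) (sched t) -> P (sched t) (rr (sched t) t) t.+1.
Proof.
move=> HT; exists t; split=> //.
by rewrite /rr (T1_noMd _ _ HT) subn0.
Qed.

Lemma ownCol t : INV t -> forall l w, (1 <= l <= dG)%N ->
  Scol adj dG f h g (st t) (sched t) l -> dist_le adj (sched t) w l.-1 ->
  P w (rr (sched t) t) t.+1.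
Proof.
move=> Hinv l w Hl; rewrite /Scol Hl andbT.
case HT1: (doT1 adj dG (st t) (sched t)); last first.
  move=> HS Hd; apply: (Pmono (leqnSn t)); apply: (Hinv _ (sched t) l) => //.
  by rewrite inE eqxx orbT.
move=> Hn [p [Hp Hlast Hsz]].
case: p Hp Hlast Hsz => [|j p] Hp Hlast Hsz.
  by rewrite /= in Hlast; rewrite -Hlast; exact: selfP.
case: l Hl Hn Hsz => [|[|l]] Hl Hn Hsz //.
move: Hp => /= /andP[Haj Hp].
have Hja : (j == sched t) = false.
  by apply/negbTE; apply: contraL Haj => /eqP ->; rewrite adj_irr.
move: Hn => /= /forallP /(_ j); rewrite inE Haj Hja /= => HS.
apply: (Pmono (leqnSn t)); apply: (Hinv _ j l.+1) => //.
- by rewrite inE Haj.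
- by rewrite /= (leq_trans _ Hl).
- by exists p; split.
Qed.

Lemma Key t : INV t -> T2t t -> Q (cnt (sched t) t) t.+1.
Proof.
move=> Hinv H2 w.
have H2' : T2b (st t) (sched t) by exact: H2.
have Hr : rr (sched t) t = cnt (sched t) t by rewrite /rr (T2_noMd _ _ H2') subn0.
rewrite -Hr.
move: H2' => /andP[Hrow _].
have [p [Hp Hlast Hsz]] := diam (sched t) w.
case: p Hp Hlast Hsz => [|j p] Hp Hlast Hsz.
  rewrite /= in Hlast; rewrite -Hlast.
  move: Hrow => /forallP /(_ (sched t)); rewrite inE eqxx orbT /= /S1 eqxx /= => HS.
  apply: (@ownCol t Hinv dG) => //; first by rewrite dG_pos leqnn.
  by exists [::].
move: Hp => /= /andP[Haj Hp].
have Hja : (j == sched t) = false.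
  by apply/negbTE; apply: contraL Haj => /eqP ->; rewrite adj_irr.
move: Hrow => /forallP /(_ j); rewrite inE Haj /= /S1 Hja andbF => HS.
apply: (Pmono (leqnSn t)); apply: (Hinv _ j dG) => //.
- by rewrite inE Haj.
- by rewrite dG_pos leqnn.
- by exists p; split => //; rewrite -ltnS (leq_trans Hsz) // (ltn_predK dG_pos).
Qed.

Lemma KP t : INV t -> T2t t -> forall w, (cnt (sched t) t <= rr w t)%N.
Proof. by move=> Hinv H2 w; apply: Pbound; apply: Key. Qed.

Definition Inv t := [/\ (forall i j, adj i j -> (rr i t <= cnt j t)%N),
  (forall i j, adj i j -> recv (st t) i j = (rr i t < cnt j t)%N),
  (forall i j, (cnt j t <= (rr i t).+1)%N) & INV t].

Lemma Inv0 : Inv 0.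
Proof.
case: init => HM HS Hrecv _ _.
have Hr : forall i, rr i 0 = 0%N by move=> i; rewrite /rr HM.
split.
- by move=> i j _; rewrite Hr.
- by move=> i j _; rewrite Hr Hrecv.
- by move=> i j; rewrite Hr.
- by move=> i j l w _ _; rewrite HS.
Qed.

Lemma InvS t : Inv t -> Inv t.+1.
Proof.
case=> HL HR HU HI.
have [rE' [rI' [rho' [eps' E]]]] := run t.
have Hkp : T2b (st t) (sched t) -> forall w, (cnt (sched t) t <= rr w t)%N.
  by move=> H2; apply: (@KP t HI).
have HcS : forall j, cnt j t.+1 = (cnt j t + (T2b (st t) (sched t) && (sched t == j)))%N.
  by move=> j; rewrite cntS.
have HrS := rrS t.
have Hsym : forall i j, adj i j -> adj j i by move=> i j; rewrite adj_sym.
split.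
- move=> i j Hij; rewrite HrS HcS.
  case Hr: (rst (st t) (sched t) i); last first.
    by rewrite addn0; exact: leq_trans (HL _ _ Hij) (leq_addr _ _).
  move: Hr => /andP[_ /forallP /(_ j)]; rewrite Hij /= /recv2 addn1.
  case: ifP => [/andP[/andP[H2 _] /eqP Ej] _ | _ Hrv].
    by rewrite Ej H2 eqxx /= addn1 ltnS; rewrite Ej in Hij; exact: HL.
  by rewrite HR // in Hrv; exact: leq_trans Hrv (leq_addr _ _).
- move=> i j Hij; rewrite E recv_step HrS HcS.
  case Hr: (rst (st t) (sched t) i).
    case H2j: (T2b (st t) (sched t) && (sched t == j)); apply/esym/negbTE; rewrite -leqNgt /=.
      move/andP: H2j => [H2 /eqP Ej]; rewrite -Ej.
      by rewrite !addn1 ltnS; exact: Hkp.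
    by rewrite addn0 addn1; exact: HU.
  rewrite /recv2 addn0.
  case: ifP => [/andP[/andP[H2 Hai] /eqP Ej] | Hn].
    by rewrite Ej H2 eqxx addn1 ltnS; rewrite Ej in Hij; rewrite HL.
  have -> : T2b (st t) (sched t) && (sched t == j) = false.
    apply/negbTE/negP => /andP[H2 /eqP Ej].
    by subst j; move: Hn; rewrite H2 eqxx andbT (Hsym _ _ Hij).
  by rewrite addn0 HR.
- move=> i j; rewrite HrS HcS.
  case H2j: (T2b (st t) (sched t) && (sched t == j)).
    move/andP: H2j => [H2 /eqP <-].
    by rewrite addn1 ltnS; exact: leq_trans (Hkp H2 i) (leq_addr _ _).
  by rewrite addn0; apply: leq_trans (HU i j) _; rewrite ltnS leq_addr.
- move=> i j l w Hj Hl; rewrite E S_step HrS.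
  case Hr: (rst (st t) (sched t) i) => //; rewrite addn0 /S2.
  case: ifP => [/andP[/andP[H2 Hai] _] _ Hd | _].
    have -> : rr i t = cnt (sched t) t.
      by apply/eqP; rewrite eqn_leq Hkp // (HL _ _ (Hsym _ _ Hai)).
    exact: (@Key t HI H2).
  case: ifP => [/andP[/andP[/andP[/andP[HT1 Hai] /eqP Ej] Hnr] Hl'] HS Hd | _].
    rewrite Ej in Hd.
    have -> : rr i t = rr (sched t) t.
      rewrite {2}/rr (T1_noMd _ _ HT1) subn0.
      apply/eqP; rewrite eqn_leq (HL _ _ (Hsym _ _ Hai)) /=.
      by rewrite (HR _ _ (Hsym _ _ Hai)) -leqNgt in Hnr.
    exact: (@ownCol t HI l w Hl HS Hd).
  rewrite /S1; case: ifP => [/andP[/eqP Ei /eqP Ej] HS Hd | _ HS Hd].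
    rewrite Ei; rewrite Ej in Hd.
    exact: (@ownCol t HI l w Hl HS Hd).
  exact: (Pmono (leqnSn t) (HI _ _ _ _ Hj Hl HS Hd)).
Qed.

Lemma Inv_all t : Inv t.
Proof. by elim: t => [|t IH]; [exact: Inv0 | exact: InvS]. Qed.

Lemma sum_cnt t : count T2t (iota 0 t) = (\sum_(w < N) cnt w t)%N.
Proof.
elim: t => [|t IH]; first by rewrite big1.
have -> : count T2t (iota 0 t.+1) = (count T2t (iota 0 t) + T2t t)%N.
  by rewrite -addn1 iotaD count_cat /= add0n addn0.
rewrite IH; apply/esym; under eq_bigr do rewrite cntS.
rewrite big_split /=; congr (_ + _)%N.
rewrite (bigD1 (sched t)) //= eqxx andbT big1 ?addn0 //.
by move=> w /negbTE Hw; rewrite eq_sym Hw andbF.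
Qed.

Lemma epoch t K : (0 < N)%N -> T2t t -> count T2t (iota 0 t) = (K * N)%N ->
  cnt (sched t) t = K /\ forall w, (cnt w t <= K)%N.
Proof.
move=> HN H2 Hc.
have [_ _ HU HI] := Inv_all t.
set m := cnt (sched t) t.
have Hra : rr (sched t) t = m.
  by rewrite /rr (T2_noMd _ _ (H2 : T2b _ _)) subn0.
have Hlo : forall w, (m <= cnt w t)%N.
  by move=> w; apply: leq_trans (@KP t HI H2 w) _; rewrite /rr leq_subr.
have Hup : forall w, (cnt w t <= m.+1)%N by move=> w; rewrite -Hra.
rewrite sum_cnt in Hc.
have Hconst : forall c, (\sum_(w < N) c = c * N)%N.
  by move=> c; rewrite big_const_ord iter_addn_0.
have L1 : (m * N <= K * N)%N.
  by rewrite -Hc -Hconst; apply: leq_sum => w _.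
have L2 : (K * N + 1 <= m.+1 * N)%N.
  have Ec : (\sum_(w < N) cnt w t = m + \sum_(w < N | w != sched t) cnt w t)%N.
    by rewrite (bigD1 (sched t)).
  have Em : (\sum_(w < N) m.+1 = m.+1 + \sum_(w < N | w != sched t) m.+1)%N.
    by rewrite (bigD1 (sched t)).
  have Hs : (\sum_(w < N | w != sched t) cnt w t <= \sum_(w < N | w != sched t) m.+1)%N.
    by apply: leq_sum => w _.
  rewrite -Hc -Hconst Ec Em; lia.
have HmK : m = K.
  apply/eqP; rewrite eqn_leq -(leq_pmul2r HN) L1 /= -ltnS -(ltn_pmul2r HN).
  by apply: leq_trans L2; rewrite addn1.
split=> // i.
have L3 : (cnt i t + m * N <= K * N + m)%N.
  have Ec : (\sum_(w < N) cnt w t = cnt i t + \sum_(w < N | w != i) cnt w t)%N.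
    by rewrite (bigD1 i).
  have Em : (\sum_(w < N) m = m + \sum_(w < N | w != i) m)%N.
    by rewrite (bigD1 i).
  have Hs : (\sum_(w < N | w != i) m <= \sum_(w < N | w != i) cnt w t)%N.
    by apply: leq_sum => w _.
  rewrite -Hc -Hconst Ec Em; lia.
by rewrite -HmK; rewrite HmK in L3; lia.
Qed.

End Main.

Theorem lemma4 (R : realType) (N n : nat) (adj : rel 'I_N) (dG : nat)
    (f h g : 'I_N -> 'rV_n -> R) (Lc : 'I_N -> R)
    (sched : nat -> 'I_N) (tau : nat -> R) (Tbar : 'I_N -> R)
    (st : nat -> state R N n) :
  (2 <= N)%N ->
  undirected_connected adj ->
  is_diameter adj dG ->
  (forall i, 0 < Lc i) ->
  timing_ok sched tau Tbar ->
  asymm_run adj dG f h g Lc st sched ->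
  forall (k tk tk' : nat),
    nth_T2 adj dG f h g st sched (k * N + 1) tk ->
    nth_T2 adj dG f h g st sched (k.+1 * N + 1) tk' ->
    forall i : 'I_N, exists t : nat,
      [/\ (tk <= t <= tk')%N, sched t = i & T1_at adj dG st sched t].
Proof.
move=> HN [Hsym Hirr _] [Hdiam _] _ _ [Hinit Hrun] k tk tk'
  [_ [H2 Hc]] [_ [H2' Hc']] i.
have HN0 : (0 < N)%N by apply: leq_trans HN.
have HdG : (0 < dG)%N.
  rewrite lt0n; apply/negP => /eqP Hd0.
  have [p [_ Hl Hs]] := Hdiam (Ordinal HN0) (Ordinal HN).
  rewrite Hd0 in Hs.
  by case: p Hl Hs => //= /(congr1 val).
have Hrun' : forall t, exists rE' rI' rho' eps',
    st t.+1 = step adj dG f h g Lc (st t) (sched t) rE' rI' rho' eps'.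
  by move=> t; have [rE' [rI' [rho' [eps' [_ _ _ E]]]]] := Hrun t;
     exists rE', rI', rho', eps'.
rewrite addn1 /= in Hc; rewrite addn1 /= in Hc'.
have [_ Hle] := @epoch _ _ _ adj dG f h g Lc sched st Hsym Hirr HdG Hdiam Hinit Hrun' _ _ HN0 H2 Hc.
have [Heq _] := @epoch _ _ _ adj dG f h g Lc sched st Hsym Hirr HdG Hdiam Hinit Hrun' _ _ HN0 H2' Hc'.
have [_ _ _ HI] := @Inv_all _ _ _ adj dG f h g Lc sched st Hsym Hirr HdG Hdiam Hinit Hrun' tk'.
have := @Key _ _ _ adj dG f h g sched st Hirr HdG Hdiam _ HI H2' i.
rewrite Heq => -[u [Hu Hs HT Hcu]].
rewrite ltnS in Hu; exists u; split=> //; rewrite Hu andbT.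
rewrite leqNgt; apply/negP => Hut.
have := Hle i.
have : (cnt adj dG f h g sched st i u <= cnt adj dG f h g sched st i tk)%N.
  by rewrite /cnt -(subnKC (ltnW Hut)) iotaD count_cat leq_addr.
by rewrite Hcu; lia.
Qed.
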